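(* For every $h>1/3$ and $q>1/2$ there is an instance with two groups of additive agents in which no allocation is $h$-democratic $q$-fraction-MMS-fair.
   Context: There is a finite set $G$ of goods and two groups $A_1,A_2$ with $n_i\ge1$ agents in $A_i$. Each agent has an additive utility $u_a:2^G\to\mathbb{R}_{\ge0}$. An allocation is a partition $(G_1,G_2)$ of $G$; agents of $A_i$ get $u_a(G_i)$. $\mathrm{MMS}^2_a(G)=\max\min(u_a(P_1),u_a(P_2))$ over partitions $(P_1,P_2)$ of $G$. The allocation is $q$-fraction-MMS-fair for $a\in A_i$ if $u_a(G_i)\ge q\,\mathrm{MMS}^2_a(G)$. An allocation is $h$-democratic fair if for each $i$ at least $h\cdot n_i$ agents of $A_i$ find it fair. *)

(* Defs.v *)
From HB Require Import structures.
From mathcomp Require Import all_boot all_order all_algebra.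
Set Implicit Arguments. Unset Strict Implicit. Unset Printing Implicit Defensive.
Import Order.TTheory GRing.Theory Num.Theory.
Local Open Scope ring_scope.

Definition util (R : realFieldType) (G : finType) (w : G -> R) (S : {set G}) : R :=
  \sum_(g in S) w g.

(* Partitions of G into two (possibly empty) parts correspond to subsets P.
   The fold starts at 0, which is harmless since utilities are nonnegative. *)
Definition mms2 (R : realFieldType) (G : finType) (w : G -> R) : R :=
  \big[Num.max/0]_(P : {set G}) Num.min (util w P) (util w (~: P)).

Definition qmms_fair (R : realFieldType) (G : finType) (q : R) (w : G -> R)
  (S : {set G}) : bool :=
  q * mms2 w <= util w S.

Definition group_hfair (R : realFieldType) (G : finType) (h q : R) (n : nat)
  (u : 'I_n -> G -> R) (S : {set G}) : Prop :=
  h * n%:R <= (#|[set a : 'I_n | qmms_fair q (u a) S]|)%:R.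

Definition hdem_qmms (R : realFieldType) (G : finType) (h q : R) (n1 n2 : nat)
  (u1 : 'I_n1 -> G -> R) (u2 : 'I_n2 -> G -> R) (S : {set G}) : Prop :=
  group_hfair h q u1 S /\ group_hfair h q u2 (~: S).

(* Main.v *)
Require Import Defs.
From HB Require Import structures.
From mathcomp Require Import all_boot all_order all_algebra.
Import Order.TTheory GRing.Theory Num.Theory.
Local Open Scope ring_scope.

Definition wv (R : realFieldType) (a g : 'I_3) : R := if a == g then 2 else 1.

Lemma mms_ge2 (R : realFieldType) (a : 'I_3) : 2 <= mms2 (wv R a).
Proof.
rewrite /mms2.
apply: le_trans (le_bigmax _ _ [set a]).
have h1 : util (wv R a) [set a] = 2 by rewrite /util big_set1 /wv eqxx.
have h2 : util (wv R a) (~: [set a]) = 2.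
  rewrite /util (eq_bigr (fun _ => 1)); last first.
    by move=> g; rewrite !inE /wv eq_sym => /negbTE ->.
  by rewrite sumr_const cardsC1 card_ord.
by rewrite h1 h2 minxx.
Qed.

Lemma few (R : realFieldType) (q : R) (T : {set 'I_3}) :
  1 / 2 < q -> (#|T| <= 1)%N ->
  (#|[set a : 'I_3 | qmms_fair q (wv R a) T]| <= 1)%N.
Proof.
move=> hq hT.
apply: leq_trans (hT); apply: subset_leq_card; apply/subsetP => a.
rewrite inE /qmms_fair => hf.
apply/negPn/negP => haT.
have hu : util (wv R a) T <= 1.
  rewrite /util (eq_bigr (fun _ => 1)); last first.
    move=> g gT; rewrite /wv; case: eqP => // e; by rewrite e gT in haT.
  by rewrite sumr_const; move: hT; rewrite -(ler_nat R).
have hm := mms_ge2 R a.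
have : 1 < q * mms2 (wv R a).
  have q0 : 0 < q by apply: lt_trans hq; rewrite divr_gt0.
  apply: lt_le_trans (_ : q * 2 <= _); last by rewrite ler_pM2l.
  by rewrite -ltr_pdivrMr // mul1r.
move=> hlt.
by move: (le_trans hf hu); rewrite leNgt hlt.
Qed.

Theorem mainTheorem11 (R : realFieldType) (h q : R) :
  1 / 3 < h -> 1 / 2 < q ->
  exists (G : finType) (n1 n2 : nat)
         (u1 : 'I_n1 -> G -> R) (u2 : 'I_n2 -> G -> R),
    [/\ (0 < n1)%N, (0 < n2)%N,
        (forall a g, 0 <= u1 a g),
        (forall a g, 0 <= u2 a g) &
        forall S : {set G}, ~ hdem_qmms h q u1 u2 S].
Proof.
move=> hh hq.
exists 'I_3, 3%N, 3%N, (@wv R), (@wv R).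
split => //.
- by move=> a g; rewrite /wv; case: eqP.
- by move=> a g; rewrite /wv; case: eqP.
move=> S [h1 h2].
have hh3 : 1 < h * 3%:R by rewrite -ltr_pdivrMr // mul1r.
have bad : forall T : {set 'I_3}, (#|T| <= 1)%N ->
    ~ group_hfair h q (@wv R) T.
  move=> T hT; rewrite /group_hfair => hg.
  have := few R q T hq hT; rewrite -(ler_nat R) => hc.
  by move: (lt_le_trans hh3 (le_trans hg hc)); rewrite ltxx.
have : (#|S| <= 1)%N || (#|~: S| <= 1)%N.
  have := cardsC S; rewrite card_ord.
  case: #|S| => [|[|[|[|n]]]] //=; case: #|~: S| => [|[|[|n']]] //.
case/orP => hc; [exact: bad _ hc h1 | exact: bad _ hc h2].
Qed.
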